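(* Let $\lambda_1,\dots,\lambda_r$ be dominant integral weights of $\mathfrak{g}$ and let $b_1,\dots,b_r\in(F^\times)^N$ satisfy $m(b_i)\ne m(b_j)$ whenever $i\ne j$. Then $V(\lambda,b)=V_{\lambda_1}(b_1)\otimes\cdots\otimes V_{\lambda_r}(b_r)$ is a finite-dimensional simple $\mathcal{L}$-module.
   Context: $F$ is an algebraically closed field of characteristic zero; $\mathfrak{g}$ is a finite-dimensional simple Lie algebra over $F$ with fixed Cartan subalgebra $\mathfrak{h}$ and base $\Delta$ of simple roots; $\sigma_1,\dots,\sigma_N$ are pairwise commuting automorphisms of $\mathfrak{g}$ of finite orders $m_1,\dots,m_N$; $\xi_i\in F$ is a fixed primitive $m_i$-th root of unity. $G=\mathbb{Z}/m_1\mathbb{Z}\times\cdots\times\mathbb{Z}/m_N\mathbb{Z}$, $\bar k$ is the image of $k\in\mathbb{Z}^N$, $\mathfrak{g}_{\bar k}=\{x\in\mathfrak{g}:\sigma_ix=\xi_i^{k_i}x\ \forall i\}$. $R=F[t_1^{\pm1},\dots,t_N^{\pm1}]$, $t^k=t_1^{k_1}\cdots t_N^{k_N}$. The multiloop algebra is $\mathcal{L}=\bigoplus_{k\in\mathbb{Z}^N}\mathfrak{g}_{\bar k}\otimes Ft^k\subseteq\mathfrak{g}\otimes R$ with pointwise bracket $[x\otimes f,y\otimes g]=[x,y]\otimes fg$. For $b=(b_1,\dots,b_N)\in(F^\times)^N$, $m(b)=(b_1^{m_1},\dots,b_N^{m_N})$. For a dominant integral weight $\lambda$, $V_\lambda$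 is the simple $\mathfrak{g}$-module of highest weight $\lambda$ and $V_\lambda(b)$ is the $\mathcal{L}$-module $V_\lambda$ with action $(x\otimes f).v=f(b)\,x.v$; $V(\lambda,b)$ carries the tensor product $\mathcal{L}$-action. *)

(* Defs.v *)
From HB Require Import structures.
From mathcomp Require Import all_boot all_order all_algebra.
Set Implicit Arguments. Unset Strict Implicit. Unset Printing Implicit Defensive.
Import Order.TTheory GRing.Theory Num.Theory.
Local Open Scope ring_scope.

(* The Lie algebra g is F^d = 'rV[F]_d with a bracket br. Subspaces of g are
   row spaces of matrices. *)
Section Lie.
Variables (F : fieldType) (d : nat).
Implicit Types (br : 'rV[F]_d -> 'rV[F]_d -> 'rV[F]_d).

Definition is_lie_bracket br :=
  [/\ (forall (a : F) x y z, br (a *: x + y) z = a *: br x z + br y z),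
      (forall x, br x x = 0) &
      (forall x y z, br x (br y z) + br y (br z x) + br z (br x y) = 0)].

Definition lie_ideal br (I : 'M[F]_d) :=
  forall x y : 'rV[F]_d, (x <= I)%MS -> (br x y <= I)%MS.

Definition lie_simple br :=
  [/\ is_lie_bracket br,
      (exists x y, br x y != 0) &
      (forall I, lie_ideal br I -> I == 0 \/ row_full I)].

Definition lie_aut br (S : 'M[F]_d) :=
  S \in unitmx /\ forall x y, br x y *m S = br (x *m S) (y *m S).

Definition has_order (S : 'M[F]_d) (m : nat) :=
  [/\ (0 < m)%N, S ^+ m = 1%:M & forall k, (0 < k < m)%N -> S ^+ k != 1%:M].

(* rho : g -> gl_n is a representation (acting on column vectors F^n) *)
Definition lie_rep br n (rho : 'rV[F]_d -> 'M[F]_n) :=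
  (forall (a : F) x y, rho (a *: x + y) = a *: rho x + rho y) /\
  (forall x y, rho (br x y) = rho x *m rho y - rho y *m rho x).

(* Invariance of the column space spanned by the rows of W under A
   (column-vector convention): A W^T <= W^T, i.e. W A^T <= W. *)
Definition col_stable n (W A : 'M[F]_n) := stablemx W A^T.

Definition irreducible_rep br n (rho : 'rV[F]_d -> 'M[F]_n) :=
  [/\ lie_rep br rho, (0 < n)%N &
      forall W : 'M[F]_n, (forall x, col_stable W (rho x)) ->
        W == 0 \/ row_full W].
End Lie.

(* Tensor product of r spaces F^(n i): basis indexed by J = prod_i 'I_(n i). *)
Definition tidx r (n : 'I_r -> nat) := {dffun forall i : 'I_r, 'I_(n i)}.

(* the operator 1 (x) ... (x) A (x) ... (x) 1 with A in the i-th slot *)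
Definition factor_op (F : fieldType) r (n : 'I_r -> nat) (i : 'I_r)
    (A : 'M[F]_(n i)) : 'M[F]_#|{: tidx n}| :=
  \matrix_(p, q)
    (let jp : tidx n := enum_val p in let jq : tidx n := enum_val q in
     if [forall l : 'I_r, (l != i) ==> (jp l == jq l)]
     then A (jp i) (jq i) else 0).

Definition monom (F : fieldType) N (b : 'I_N -> F) (k : 'I_N -> int) : F :=
  \prod_(l < N) (b l) ^ (k l).

Definition in_grade (F : fieldType) d N (sigma : 'I_N -> 'M[F]_d)
    (xi : 'I_N -> F) (k : 'I_N -> int) (x : 'rV[F]_d) :=
  forall l, x *m sigma l = (xi l ^ (k l)) *: x.

(* action of x (x) t^k on V_{l_1}(b_1) (x) ... (x) V_{l_r}(b_r) *)
Definition L_op (F : fieldType) d N r (n : 'I_r -> nat)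
    (rho : forall i : 'I_r, 'rV[F]_d -> 'M[F]_(n i))
    (b : 'I_r -> 'I_N -> F) (x : 'rV[F]_d) (k : 'I_N -> int)
    : 'M[F]_#|{: tidx n}| :=
  \sum_(i < r) monom (b i) k *: factor_op (rho i x).

(* Main.v *)
Require Import Defs.
From HB Require Import structures.
From mathcomp Require Import all_boot all_order all_algebra.
Import GRing.Theory.
Local Open Scope ring_scope.
From Stdlib Require Import Classical.

Module Helpers.
Set Implicit Arguments. Unset Strict Implicit. Unset Printing Implicit Defensive.

Section Span.
Variables (F : fieldType) (k : nat) (Q : 'rV[F]_k -> Prop).
Hypotheses (Q0 : Q 0) (QD : forall u v, Q u -> Q v -> Q (u + v))
           (QZ : forall a u, Q u -> Q (a *: u)).

Lemma span_exists : exists M : 'M[F]_k, forall v, Q v <-> (v <= M)%MS.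
Proof.
pose good (M : 'M[F]_k) := forall u : 'rV_k, (u <= M)%MS -> Q u.
suff: forall j (M : 'M[F]_k), good M -> (k - \rank M <= j)%N ->
        exists M', good M' /\ forall v, Q v -> (v <= M')%MS.
  move=> H.
  have g0 : good 0 by move=> u /submx0null ->.
  have [M' [gM' HM']] := H k 0 g0 (leq_subr _ _).
  by exists M' => v; split; [apply: HM' | apply: gM'].
elim=> [|j IH] M gM hj.
  exists M; split=> // v _.
  have rM : \rank M = k.
    by apply/eqP; rewrite eqn_leq rank_leq_col /= -subn_eq0 -leqn0.
  by apply: submx_full; rewrite /row_full rM.
case: (classic (forall v, Q v -> (v <= M)%MS)) => [H|].
  by exists M.
move=> /not_all_ex_not [v] Hv.
have [Qv nvM] := imply_to_and _ _ Hv.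
have gM2 : good (M + v)%MS.
  move=> u /sub_addsmxP [[u1 u2] /= ->].
  apply: QD; first by apply: gM; exact: submxMl.
  have: (u2 *m v <= v)%MS by exact: submxMl.
  by case/sub_rVP=> a ->; apply: QZ.
apply: (IH _ gM2).
have sM : (M <= M + v)%MS by exact: addsmxSl.
have := mxrank_leqif_sup sM; case=> le _.
have lt : (\rank M < \rank (M + v)%MS)%N.
  rewrite ltn_neqAle le andbT; apply/negP => /eqP e.
  have := mxrank_leqif_sup sM; case=> _ /esym; rewrite e eqxx => h.
  by apply: nvM; apply: submx_trans (addsmxSr M v) h.
have rk : (\rank (M + v)%MS <= k)%N by exact: rank_leq_col.
rewrite -ltnS; apply: leq_trans hj.
by apply: ltn_sub2l => //; apply: leq_trans lt rk.
Qed.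
End Span.

Lemma eig_in_stable (F : closedFieldType) m n (T : 'M[F]_(m, n)) (f : 'M_n) :
  stablemx T f -> T != 0 ->
  exists (a : F) (w : 'rV_n), [/\ (w <= T)%MS, w != 0 & w *m f = a *: w].
Proof.
move=> sT nzT.
set V := row_base T.
have fV : row_free V by exact: row_base_free.
have sV : stablemx V f by rewrite stablemx_row_base.
have [a ra] : exists a, root (char_poly (conjmx V f)) a.
  apply/closed_rootP; rewrite size_char_poly; apply/negP => /eqP [].
  by move/eqP; rewrite mxrank_eq0 (negPf nzT).
rewrite -eigenvalue_root_char in ra.
case/eigenvalueP: ra => y hy nzy.
exists a, (y *m V); split.
- by rewrite -(eq_row_base T) submxMl.
- by rewrite mulmx_free_eq0.
- apply/eigenspaceP; rewrite -sub_eigenspace_conjmx //.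
  by apply/eigenspaceP.
Qed.

Section Burnside.
Variables (F : closedFieldType) (n : nat) (P : 'M[F]_n -> Prop).
Hypotheses (P1 : P 1%:M) (PD : forall A B, P A -> P B -> P (A + B))
  (PZ : forall a A, P A -> P (a *: A)) (PM : forall A B, P A -> P B -> P (A *m B))
  (Pirr : forall U : 'M[F]_n, (forall B, P B -> (U *m B <= U)%MS) ->
            U = 0 \/ row_full U).

Lemma P0 : P 0.
Proof. by rewrite -(scale0r 1%:M); apply: PZ. Qed.

Lemma Psum I (r : seq I) (p : pred I) (G : I -> 'M_n) :
  (forall i, p i -> P (G i)) -> P (\sum_(i <- r | p i) G i).
Proof.
by move=> H; apply: (big_ind P P0 PD).
Qed.

Lemma fact_a (v : 'rV[F]_n) : v != 0 -> forall u, exists2 B, P B & u = v *m B.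
Proof.
move=> nzv.
pose Q u := exists2 B, P B & u = v *m B.
have [M HM] : exists M : 'M[F]_n, forall u, Q u <-> (u <= M)%MS.
  apply: span_exists.
  - by exists 0; [exact: P0 | rewrite mulmx0].
  - by move=> u w [B PB ->] [C PC ->]; exists (B + C); [exact: PD | rewrite mulmxDr].
  - by move=> a u [B PB ->]; exists (a *: B); [exact: PZ | rewrite scalemxAr].
have inv : forall B, P B -> (M *m B <= M)%MS.
  move=> B PB; apply/row_subP => i; rewrite row_mul.
  have /HM [C PC eC] : (row i M <= M)%MS by exact: row_sub.
  by apply/HM; exists (C *m B); [exact: PM | rewrite eC mulmxA].
have vM : (v <= M)%MS by apply/HM; exists 1%:M => //; rewrite mulmx1.
case: (Pirr inv) => [M0|fM].
  by move: vM; rewrite M0 submx0 (negPf nzv).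
by move=> u; apply/HM; exact: submx_full.
Qed.

Lemma fact_b (c : 'cV[F]_n) : c != 0 -> forall d, exists2 B, P B & d = B *m c.
Proof.
move=> nzc.
pose Q1 (u : 'rV[F]_n) := forall B, P B -> u *m (B *m c) = 0.
have [M1 HM1] : exists M : 'M[F]_n, forall u, Q1 u <-> (u <= M)%MS.
  apply: span_exists.
  - by move=> B _; rewrite mul0mx.
  - by move=> u w hu hw B PB; rewrite mulmxDl hu // hw // addr0.
  - by move=> a u hu B PB; rewrite -scalemxAl hu // scaler0.
have inv1 : forall B, P B -> (M1 *m B <= M1)%MS.
  move=> B PB; apply/row_subP => i; rewrite row_mul.
  have /HM1 hr : (row i M1 <= M1)%MS by exact: row_sub.
  by apply/HM1 => C PC; rewrite -mulmxA (mulmxA B) hr //; exact: PM.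
have Q1_0 : forall u, Q1 u -> u = 0.
  case: (Pirr inv1) => [M0|fM].
    by move=> u /HM1; rewrite M0 => /submx0null.
  exfalso; have [j cj] : exists j, c j 0 != 0.
    apply/existsP; move: nzc; apply: contraR; rewrite negb_exists => /forallP H.
    by apply/eqP/matrixP => i k; rewrite (ord1 k) mxE; apply/eqP/negbNE/H.
  have : Q1 (delta_mx 0 j) by apply/HM1; exact: submx_full.
  move/(_ _ P1); rewrite mul1mx => /matrixP/(_ 0 0); rewrite !mxE.
  rewrite (bigD1 j) //= big1 ?addr0 ?mxE ?eqxx ?mul1r; first by move/eqP; rewrite (negPf cj).
  by move=> i /negPf ij; rewrite !mxE ij andbF mul0r.
pose Q2 (u : 'rV[F]_n) := exists2 B, P B & u = (B *m c)^T.
have [M2 HM2] : exists M : 'M[F]_n, forall u, Q2 u <-> (u <= M)%MS.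
  apply: span_exists.
  - by exists 0; [exact: P0 | rewrite mul0mx trmx0].
  - by move=> u w [B PB ->] [C PC ->]; exists (B + C); [exact: PD | rewrite mulmxDl linearD].
  - by move=> a u [B PB ->]; exists (a *: B); [exact: PZ | rewrite -scalemxAl linearZ].
have fM2 : row_full M2.
  apply: contraT => nf.
  have : kermx M2^T != 0.
    rewrite -mxrank_eq0 mxrank_ker mxrank_tr subn_eq0 -ltnNge.
    by move: nf; rewrite /row_full ltn_neqAle rank_leq_col andbT.
  case/rowV0Pn => u uK nzu; move: nzu; rewrite (Q1_0 u) ?eqxx //.
  move=> B PB.
  have /HM2 /submxP [y ey] : Q2 (B *m c)^T by exists B.
  have -> : B *m c = M2^T *m y^T by rewrite -trmx_mul -ey trmxK.
  by rewrite mulmxA (sub_kermxP uK) mul0mx.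
move=> d; have /HM2 [B PB eB] : (d^T <= M2)%MS by exact: submx_full.
by exists B => //; apply: trmx_inj.
Qed.

Lemma rank_one_exists : (0 < n)%N ->
  exists (c : 'cV[F]_n) (v : 'rV[F]_n), [/\ c != 0, v != 0 & P (c *m v)].
Proof.
move=> n0.
suff H : forall k (T : 'M[F]_n), P T -> \rank T = k.+1 ->
    exists (c : 'cV[F]_n) (v : 'rV[F]_n), [/\ c != 0, v != 0 & P (c *m v)].
  by apply: (H n.-1 1%:M P1); rewrite mxrank1 prednK.
elim/ltn_ind => k IH T PT rT.
have nzT : T != 0 by rewrite -mxrank_eq0 rT.
case: k IH rT => [|k] IH rT.
  case/rowV0Pn: (nzT) => v vT nzv.
  have Tv : (T <= v)%MS.
    have := mxrank_leqif_sup vT; case=> _ <-.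
    by rewrite rank_rV nzv rT.
  exists (T *m pinvmx v), v; split => //.
    by apply: contraNneq nzT => e; rewrite -(mulmxKpV Tv) e mul0mx.
  by rewrite mulmxKpV.
have [i nzi] : exists i, row i T != 0.
  apply/existsP; move: nzT; apply: contraR; rewrite negb_exists => /forallP H.
  by apply/eqP/row_matrixP => i; rewrite row0; apply/eqP/negbNE/H.
have [j nij] : exists j, ~~ (row j T <= row i T)%MS.
  apply/row_subPn; apply/negP => sT.
  have := mxrankS sT; rewrite rank_rV nzi rT.
  by [].
have [B PB eB] := fact_a nzi (delta_mx 0 j).
have sT : stablemx T (B *m T) by rewrite mulmxA submxMl.
have [a [w [wT nzw ew]]] := eig_in_stable sT nzT.
pose C := B *m T - a%:M.
have eT' : T *m C = T *m B *m T + (- a) *: T.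
  by rewrite /C mulmxBr mul_mx_scalar mulmxA scaleNr.
have PT' : P (T *m C) by rewrite eT'; apply: PD; [apply: PM => //; exact: PM | exact: PZ].
have nzT' : T *m C != 0.
  apply/negP => /eqP e.
  have : row i (T *m C) = 0 by rewrite e row0.
  rewrite row_mul /C mulmxBr mulmxA -eB mul_mx_scalar.
  rewrite -rowE => /eqP; rewrite subr_eq0 => /eqP ej.
  by move: nij; rewrite ej scalemx_sub.
have ltr : (\rank (T *m C) < \rank T)%N.
  have := mxrank_mul_ker T C.
  have : (1 <= \rank (T :&: kermx C))%N.
    have <- : \rank w = 1%N by rewrite rank_rV nzw.
    apply: mxrankS; rewrite sub_capmx wT /=; apply/sub_kermxP.
    by rewrite /C mulmxBr ew mul_mx_scalar subrr.
  move=> h1 <-; rewrite -[X in (X < _)%N]addn0 ltn_add2l.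
  by [].
have pos : (0 < \rank (T *m C))%N by rewrite lt0n mxrank_eq0.
apply: (IH (\rank (T *m C)).-1 _ (T *m C) PT').
  by rewrite -ltnS prednK // -rT.
by rewrite prednK.
Qed.

Lemma burnside_row : forall A, P A.
Proof.
case: (posnP n) => [n0 | n0] A.
  have -> : A = 0 by apply/matrixP => i; have := ltn_ord i; rewrite {2}n0.
  exact: P0.
have [c [v [nzc nzv Pcv]]] := rank_one_exists n0.
have Pd : forall i j, P (delta_mx i j).
  move=> i j.
  have [B1 PB1 e1] := fact_b nzc (delta_mx i 0).
  have [B2 PB2 e2] := fact_a nzv (delta_mx 0 j).
  have -> : delta_mx i j = B1 *m (c *m v) *m B2.
    by rewrite mulmxA -e1 -mulmxA -e2 mul_delta_mx.
  by apply: PM => //; exact: PM.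
rewrite [A]matrix_sum_delta; apply: Psum => i _; apply: Psum => j _.
exact: PZ.
Qed.
End Burnside.

Section Tensor.
Variables (F : fieldType) (r : nat) (n : 'I_r -> nat).
Local Notation T := (tidx n).
Local Notation NN := #|{: tidx n}|.

Definition upd (R : T) (i : 'I_r) (a : 'I_(n i)) : T :=
  @finfun 'I_r (fun l => 'I_(n l)) (dfwith (fun l => R l) a).
Arguments upd : clear implicits.

Lemma upd_in R i a : upd R i a i = a.
Proof. by rewrite ffunE dfwith_in. Qed.

Lemma upd_out R i a l : i != l -> upd R i a l = R l.
Proof. by move=> il; rewrite ffunE dfwith_out. Qed.

Lemma upd_upd R i a b : upd (upd R i b) i a = upd R i a.
Proof.
apply/ffunP => l; case: (eqVneq i l) => [<-|il]; first by rewrite !upd_in.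
by rewrite !upd_out.
Qed.

Lemma upd_id R i : upd R i (R i) = R.
Proof.
apply/ffunP => l; case: (eqVneq i l) => [<-|il]; first by rewrite !upd_in.
by rewrite !upd_out.
Qed.

Lemma factor_op_tr i (A : 'M[F]_(n i)) : (factor_op A)^T = factor_op A^T.
Proof.
apply/matrixP => p q; rewrite !mxE /=.
have -> : [forall l, (l != i) ==> (enum_val q l == enum_val p l)] =
          [forall l, (l != i) ==> (enum_val p l == enum_val q l)].
  by apply/forallP/forallP => H l; have := H l; case: (l != i) => //=; rewrite eq_sym.
by case: ifP; rewrite ?mxE.
Qed.

Lemma factor_op_delta (v : 'rV[F]_NN) i (a c : 'I_(n i)) q :
  (v *m factor_op (delta_mx a c)) 0 q =
  if enum_val q i == c then v 0 (enum_rank (upd (enum_val q) i a)) else 0.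
Proof.
rewrite !mxE (bigD1 (enum_rank (upd (enum_val q) i a))) //=; rewrite !mxE /=.
rewrite big1 ?addr0.
  rewrite enum_rankK upd_in mxE eqxx /=.
  have -> : [forall l, (l != i) ==> (upd (enum_val q) i a l == enum_val q l)].
    by apply/forallP => l; apply/implyP => li; rewrite upd_out // eq_sym.
  by case: ifP => _; rewrite ?mulr1 ?mulr0.
move=> p np; rewrite !mxE /=.
case: ifP => [/forallP H|]; last by rewrite mulr0.
case: (eqVneq (enum_val p i) a) => [epa|]; last by move=> /negPf pa; rewrite mxE pa mulr0.
exfalso; move/eqP: np; apply.
rewrite -[p]enum_valK; congr enum_rank.
apply/ffunP => l; case: (eqVneq i l) => [<-|il]; first by rewrite upd_in.
rewrite upd_out //; apply/eqP; move/implyP: (H l); apply; by rewrite eq_sym.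
Qed.


Definition agr i (R S : T) := [forall l, (l != i) ==> (R l == S l)].

Lemma factor_opE i (A : 'M[F]_(n i)) p q :
  factor_op A p q = if agr i (enum_val p) (enum_val q)
                    then A (enum_val p i) (enum_val q i) else 0.
Proof. by rewrite mxE. Qed.

Lemma agr_upd i R S b : agr i (upd R i b) S = agr i R S.
Proof.
apply/forallP/forallP => H l; have := H l; case: (eqVneq l i) => //= li.
  by rewrite upd_out // eq_sym.
by rewrite upd_out // eq_sym.
Qed.

Lemma agr_eq i (R S : T) : agr i R S -> S i = R i -> S = R.
Proof.
move=> /forallP H e; apply/ffunP => l; case: (eqVneq l i) => [->|li] //.
by have := H l; rewrite li /= => /eqP.
Qed.

Lemma factor_opD i (A B : 'M[F]_(n i)) : factor_op (A + B) = factor_op A + factor_op B.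
Proof.
apply/matrixP => p q; rewrite !mxE /=.
by case: ifP; rewrite ?mxE ?addr0.
Qed.

Lemma factor_opZ i a (A : 'M[F]_(n i)) : factor_op (a *: A) = a *: factor_op A.
Proof.
apply/matrixP => p q; rewrite !mxE /=.
by case: ifP; rewrite ?mxE ?mulr0.
Qed.

Lemma factor_op1 i : factor_op (1%:M : 'M[F]_(n i)) = 1%:M.
Proof.
apply/matrixP => p q; rewrite factor_opE !mxE.
case: ifP => [ag|nag].
  case: (eqVneq p q) => [->|npq]; first by rewrite eqxx.
  have : enum_val p i != enum_val q i.
    apply: contra npq => /eqP e; rewrite -[p]enum_valK -[q]enum_valK.
    apply/eqP; congr enum_rank; apply: agr_eq; last by first [exact: e | exact: (esym e)].
    apply/forallP => l; move/forallP: ag => /(_ l).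
    by case: (l != i) => //= /eqP ->.
  by move=> /negPf ->.
case: (eqVneq p q) => // e; move: nag; rewrite e.
by move/negP; case; apply/forallP => l; rewrite eqxx implybT.
Qed.

Lemma factor_opM i (A B : 'M[F]_(n i)) :
  factor_op (A *m B) = factor_op A *m factor_op B.
Proof.
apply/matrixP => p q; rewrite factor_opE !mxE.
rewrite (partition_big (fun s : 'I_NN => (enum_val s : T) i) xpredT) //.
have inner : forall bb : 'I_(n i),
   \sum_(s : 'I_NN | true && ((enum_val s : T) i == bb)) factor_op A p s * factor_op B s q =
   if agr i (enum_val p) (enum_val q) then A (enum_val p i) bb * B bb (enum_val q i)
   else 0.
  move=> bb.
  rewrite (bigD1 (enum_rank (upd (enum_val p) i bb))) /=; last first.
    by rewrite enum_rankK upd_in.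
  rewrite big1 ?addr0.
    rewrite !factor_opE enum_rankK upd_in agr_upd.
    have -> : agr i (enum_val p) (upd (enum_val p) i bb).
      apply/forallP => l; apply/implyP => li; rewrite upd_out //.
      by rewrite eq_sym.
    by case: ifP; rewrite ?mulr0.
  move=> s /andP [/eqP esb ns]; rewrite factor_opE.
  case: ifP => [ag|]; last by rewrite mul0r.
  exfalso; move/eqP: ns; apply; rewrite -[s]enum_valK; congr enum_rank.
  apply/esym; apply: (@agr_eq i); last by rewrite upd_in esb.
  apply/forallP => l; move/forallP: ag => /(_ l).
  case: (eqVneq l i) => //= li /eqP <-; rewrite upd_out //.
  by rewrite eq_sym.
rewrite [RHS](eq_bigr (fun bb => if agr i (enum_val p) (enum_val q)
   then A (enum_val p i) bb * B bb (enum_val q i) else 0)); last first.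
  by move=> bb _; exact: inner.
case: ifP => _; last by rewrite big1.
by apply: eq_bigr.
Qed.

Lemma tensor_irr (W : 'M[F]_NN) :
  (forall i (A : 'M[F]_(n i)), col_stable W (factor_op A)) ->
  W == 0 \/ row_full W.
Proof.
move=> HW.
have HW' : forall i (A : 'M[F]_(n i)), (W *m factor_op A <= W)%MS.
  by move=> i A; have := HW i A^T; rewrite /col_stable factor_op_tr trmxK.
case: (eqVneq W 0) => [->|nzW]; [by left | right].
suff Hd : forall T0 : T, ((delta_mx 0 (enum_rank T0) : 'rV[F]_NN) <= W)%MS.
  rewrite -sub1mx; apply/row_subP => q; rewrite row1.
  by have := Hd (enum_val q); rewrite enum_valK.
move=> T0.
suff : forall t, (t <= r)%N -> exists2 v : 'rV[F]_NN, (v <= W)%MS &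
   v != 0 /\ forall q, v 0 q != 0 -> forall l : 'I_r, (l < t)%N -> enum_val q l = T0 l.
  case/(_ r (leqnn r)) => v vW [nzv Hv].
  have Hsupp : forall q, v 0 q != 0 -> q = enum_rank T0.
    move=> q /Hv H; rewrite -[q]enum_valK; congr enum_rank.
    by apply/ffunP => l; apply: H.
  have ev : v = v 0 (enum_rank T0) *: delta_mx 0 (enum_rank T0).
    apply/matrixP => i q; rewrite (ord1 i) !mxE eqxx /=.
    case: (eqVneq q (enum_rank T0)) => [->|nq]; first by rewrite mulr1.
    rewrite mulr0; apply/eqP; apply: contraR nq => /Hsupp ->; by [].
  have nz0 : v 0 (enum_rank T0) != 0.
    by apply: contraNneq nzv => e; rewrite ev e scale0r.
  have -> : delta_mx 0 (enum_rank T0) = (v 0 (enum_rank T0))^-1 *: v.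
    by rewrite {2}ev scalerA mulVf // scale1r.
  by rewrite scalemx_sub.
elim=> [|t IH] ht.
  case/rowV0Pn: nzW => v vW nzv; exists v => //; split=> // q _ l.
have [v vW [nzv Hv]] := IH (ltnW ht).
pose i : 'I_r := Ordinal ht.
have [q0 nq0] : exists q0, v 0 q0 != 0.
  apply/existsP; move: nzv; apply: contraR; rewrite negb_exists => /forallP H.
  by apply/eqP/matrixP => a q; rewrite (ord1 a) mxE; apply/eqP/negbNE/H.
pose R0 := enum_val q0.
exists (v *m factor_op (delta_mx (R0 i) (T0 i))).
  by apply: submx_trans (HW' i (delta_mx (R0 i) (T0 i))); exact: submxMr.
split.
  apply/negP => /eqP e.
  have := congr1 (fun M : 'rV[F]_NN => M 0 (enum_rank (upd R0 i (T0 i)))) e.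
  rewrite /= factor_op_delta enum_rankK upd_in eqxx upd_upd upd_id enum_valK mxE.
  by apply/eqP.
move=> q; rewrite factor_op_delta.
case: ifP => [/eqP eqi|]; last by rewrite eqxx.
move=> /Hv H l; rewrite ltnS leq_eqVlt => /orP [/eqP lt|lt].
  have -> : l = i by apply: val_inj.
  exact: eqi.
have il : i != l by rewrite neq_ltn lt orbT.
by rewrite -(H l lt) enum_rankK upd_out.
Qed.
End Tensor.

Lemma sum_cyclic (V : zmodType) M (g : nat -> V) : (0 < M)%N -> g M = g 0%N ->
  \sum_(j < M) g j.+1 = \sum_(j < M) g j.
Proof.
case: M => // M _ gM.
by rewrite big_ord_recr big_ord_recl /= gM addrC.
Qed.

Section Grade.
Variables (F : fieldType) (d N : nat) (m : 'I_N -> nat) (sigma : 'I_N -> 'M[F]_d)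
  (xi : 'I_N -> F).
Hypotheses (charF0 : [pchar F] =i pred0)
  (sigma_ord : forall l, has_order (sigma l) (m l))
  (sigma_comm : forall l l', sigma l *m sigma l' = sigma l' *m sigma l)
  (xi_prim : forall l, (m l).-primitive_root (xi l)).

Lemma m_pos l : (0 < m l)%N. Proof. by case: (sigma_ord l). Qed.
Lemma sig_m l : sigma l ^+ m l = 1%:M. Proof. by case: (sigma_ord l). Qed.

Lemma xi_ne0 l : xi l != 0.
Proof.
apply/negP => /eqP e; have := prim_expr_order (xi_prim l).
by rewrite e expr0n eqn0Ngt m_pos /= => /eqP; rewrite eq_sym oner_eq0.
Qed.

Definition Proj (l : 'I_N) (c : nat) : 'M[F]_d :=
  (m l)%:R^-1 *: \sum_(j < m l) (((xi l)^-1) ^+ (c * j)) *: (sigma l ^+ j).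

Lemma mR_ne0 l : (m l)%:R != 0 :> F.
Proof.
have /pcharf0P -> : has_pchar0 F by [].
by rewrite -lt0n m_pos.
Qed.

Lemma geom_sum l (j : nat) : (0 < j < m l)%N ->
  \sum_(c < m l) (xi l)^-1 ^+ (c * j) = 0.
Proof.
move=> /andP [j0 jm].
set w := (xi l)^-1 ^+ j.
have -> : \sum_(c < m l) (xi l)^-1 ^+ (c * j) = \sum_(c < m l) w ^+ c.
  by apply: eq_bigr => c _; rewrite mulnC exprM.
have w1 : w != 1.
  rewrite /w exprVn invr_eq1 -(prim_order_dvd (xi_prim l)).
  by apply/negP => /(dvdn_leq j0); rewrite leqNgt jm.
have wm : w ^+ m l = 1.
  by rewrite /w -exprM mulnC exprM exprVn (prim_expr_order (xi_prim l)) invr1 expr1n.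
have := subrX1 w (m l); rewrite wm subrr => /esym /eqP.
by rewrite mulf_eq0 subr_eq0 (negPf w1) /= => /eqP.
Qed.

Lemma proj_sum l : \sum_(c < m l) Proj l c = 1%:M.
Proof.
rewrite /Proj -scaler_sumr exchange_big /=.
rewrite (eq_bigr (fun j : 'I_(m l) => (\sum_(c < m l) (xi l)^-1 ^+ (c * j)) *: sigma l ^+ j)); last first.
  by move=> j _; rewrite scaler_suml.
have m0 := m_pos l.
rewrite (bigD1 (Ordinal m0)) //= [X in _ + X]big1 ?addr0.
  rewrite (eq_bigr (fun _ => 1)); last by move=> c _; rewrite /= muln0 expr0.
  rewrite sumr_const card_ord expr0 scalerA mulVf ?mR_ne0 // scale1r.
  by [].
move=> j nj; rewrite geom_sum ?scale0r //.
rewrite ltn_ord andbT lt0n; apply: contra nj => /eqP j0.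
by apply/eqP; apply: val_inj.
Qed.

Lemma proj_eig l c : Proj l c *m sigma l = xi l ^+ c *: Proj l c.
Proof.
rewrite /Proj -scalemxAl scalerA mulrC -scalerA; congr (_ *: _).
rewrite mulmx_suml.
set g := fun j : nat => (xi l)^-1 ^+ (c * j) *: sigma l ^+ j.
have gM : g (m l) = g 0%N.
  rewrite /g muln0 !expr0 mulnC exprM exprVn (prim_expr_order (xi_prim l)).
  by rewrite invr1 expr1n sig_m.
rewrite -(sum_cyclic (m_pos l) gM) scaler_sumr; apply: eq_bigr => j _.
rewrite /g -scalemxAl mulmxE -exprSr mulnS exprD.
by rewrite scalerA mulrA -exprMn mulfV ?xi_ne0 // expr1n mul1r.
Qed.

Lemma proj_comm l l' c : sigma l' *m Proj l c = Proj l c *m sigma l'.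
Proof.
rewrite /Proj -scalemxAl -scalemxAr; congr (_ *: _).
rewrite mulmx_sumr mulmx_suml; apply: eq_bigr => j _.
rewrite -scalemxAl -scalemxAr; congr (_ *: _).
have := @commrX _ (sigma l') (sigma l) j.
rewrite /GRing.comm !mulmxE => -> //.
by rewrite -!mulmxE sigma_comm.
Qed.

Variable S : 'rV[F]_d -> Prop.
Hypotheses (SD : forall x y, S x -> S y -> S (x + y))
  (HS : forall k x, in_grade sigma xi k x -> S x).

Lemma S0 : S 0.
Proof. by apply: (HS (k := fun _ => 0)) => l; rewrite mul0mx scaler0. Qed.

Lemma all_S x : S x.
Proof.
pose pg t (x : 'rV[F]_d) := exists k : 'I_N -> int,
  forall l : 'I_N, (l < t)%N -> x *m sigma l = xi l ^ k l *: x.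
suff H : forall e t x, (N - t)%N = e -> pg t x -> S x.
  by apply: (H N 0%N) => //; [rewrite subn0 | exists (fun _ => 0)].
elim=> [|e IH] t y.
  move=> /eqP; rewrite subn_eq0 => Nt [k Hk].
  apply: (HS (k := k)) => l; apply: Hk.
  by apply: leq_trans Nt.
move=> He [k Hk].
have tN : (t < N)%N by rewrite -subn_gt0 He.
pose lt := Ordinal tN.
have -> : y = \sum_(c < m lt) y *m Proj lt c by rewrite -mulmx_sumr proj_sum mulmx1.
apply: (big_ind S S0 SD) => c _.
apply: (IH t.+1).
  by rewrite subnS He.
exists (fun l => if l == lt then (c : nat)%:Z else k l) => l.
rewrite ltnS leq_eqVlt => /orP [/eqP elt|ltl].
  have -> : l = lt by apply: val_inj.
  by rewrite eqxx -mulmxA proj_eig scalemxAr.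
have -> : (l == lt) = false.
  by apply/negP => /eqP el; move: ltl; rewrite el ltnn.
by rewrite -mulmxA -proj_comm mulmxA Hk // -scalemxAl.
Qed.
End Grade.

Section Stab.
Variables (F : fieldType) (k : nat) (W : 'M[F]_k).
Lemma stabD A B : col_stable W A -> col_stable W B -> col_stable W (A + B).
Proof. by rewrite /col_stable linearD; apply: stablemxD. Qed.
Lemma stabZ a A : col_stable W A -> col_stable W (a *: A).
Proof.
rewrite /col_stable linearZ /= -mul_scalar_mx => h.
by apply: stablemxM => //; exact: stablemxC.
Qed.
Lemma stabM A B : col_stable W A -> col_stable W B -> col_stable W (A *m B).
Proof. by rewrite /col_stable trmx_mul => hA hB; apply: stablemxM. Qed.
Lemma stab0 : col_stable W 0.
Proof. by rewrite /col_stable trmx0; exact: stablemx0. Qed.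
Lemma stab1 : col_stable W 1%:M.
Proof. by rewrite /col_stable trmx1; exact: stablemxC. Qed.
Lemma stab_sum I (s : seq I) (P : pred I) (G : I -> 'M_k) :
  (forall i, P i -> col_stable W (G i)) -> col_stable W (\sum_(i <- s | P i) G i).
Proof. by move=> H; apply: (big_ind (col_stable W) stab0 stabD). Qed.
Lemma stabZK a A : a != 0 -> col_stable W (a *: A) -> col_stable W A.
Proof. by move=> a0 /(stabZ a^-1); rewrite scalerA mulVf // scale1r. Qed.
End Stab.

Section Interp.
Variables (F : fieldType) (d N r : nat) (n : 'I_r -> nat)
  (rho : forall i : 'I_r, 'rV[F]_d -> 'M[F]_(n i))
  (b : 'I_r -> 'I_N -> F) (m : 'I_N -> nat) (sigma : 'I_N -> 'M[F]_d)
  (xi : 'I_N -> F).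
Hypotheses (m_pos : forall l, (0 < m l)%N)
  (xi_prim : forall l, (m l).-primitive_root (xi l))
  (b_unit : forall i l, b i l != 0)
  (b_dist : forall i j : 'I_r, i != j ->
              exists l : 'I_N, b i l ^+ m l != b j l ^+ m l).
Local Notation NN := #|{: tidx n}|.
Variable W : 'M[F]_NN.
Hypothesis HW : forall k x, in_grade sigma xi k x -> col_stable W (L_op rho b x k).

Definition shift (k : 'I_N -> int) (l : 'I_N) : 'I_N -> int :=
  fun l' => k l' + (if l' == l then (m l)%:Z else 0).

Lemma xi_neq0 l : xi l != 0.
Proof.
apply/negP => /eqP e; have := prim_expr_order (xi_prim l).
by rewrite e expr0n eqn0Ngt m_pos /= => /eqP; rewrite eq_sym oner_eq0.
Qed.

Lemma monom_shift i k l : monom (b i) (shift k l) = monom (b i) k * b i l ^+ m l.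
Proof.
rewrite /monom /shift.
rewrite (eq_bigr (fun l' => b i l' ^ k l' * b i l' ^ (if l' == l then (m l)%:Z else 0))); last first.
  by move=> l' _; rewrite expfzDr.
rewrite big_split /=; congr (_ * _).
rewrite (bigD1 l) //= eqxx big1 ?mulr1 //.
by move=> l' /negPf ->; rewrite expr0z.
Qed.

Lemma in_grade_shift k l x : in_grade sigma xi k x -> in_grade sigma xi (shift k l) x.
Proof.
move=> H l'; rewrite H /shift; case: (eqVneq l' l) => [->|_]; last by rewrite addr0.
have e1 : xi l ^ (m l)%:Z = 1 := prim_expr_order (xi_prim l).
by rewrite expfzDr ?xi_neq0 // e1 mulr1.
Qed.

Definition Gs x (s : seq ('I_N * F)) k :=
  \sum_(i < r) (monom (b i) k * \prod_(p <- s) (b i p.1 ^+ m p.1 - p.2))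
     *: factor_op (rho i x).

Lemma Gs_stab x s : forall k, in_grade sigma xi k x -> col_stable W (Gs x s k).
Proof.
elim: s => [|[l u] s IH] k Hk.
  rewrite /Gs; under eq_bigr do rewrite big_nil mulr1.
  exact: HW.
have -> : Gs x ((l, u) :: s) k = Gs x s (shift k l) + (- u) *: Gs x s k.
  rewrite /Gs scaler_sumr -big_split /=; apply: eq_bigr => i _.
  rewrite big_cons /= monom_shift scalerA -scalerDl; congr (_ *: _).
  by rewrite mulrBl mulrBr !mulrA mulNr mulNr (mulrC u).
apply: stabD; first exact/IH/in_grade_shift.
by apply: stabZ; exact: IH.
Qed.

Lemma choose_s (i0 : 'I_r) (t : seq 'I_r) : i0 \notin t ->
  exists s : seq ('I_N * F),
    \prod_(p <- s) (b i0 p.1 ^+ m p.1 - p.2) != 0 /\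
    forall i, i \in t -> \prod_(p <- s) (b i p.1 ^+ m p.1 - p.2) = 0.
Proof.
elim: t => [|j t IH].
  by move=> _; exists [::]; split => [|i]; rewrite ?big_nil ?oner_eq0.
rewrite in_cons negb_or => /andP [nij nit].
have [s [hs0 hs]] := IH nit.
have nji : j != i0 by rewrite eq_sym.
have [l hl] := b_dist nji.
exists ((l, b j l ^+ m l) :: s); split.
  by rewrite big_cons mulf_neq0 //= subr_eq0 eq_sym.
move=> i; rewrite in_cons => /orP [/eqP ->|it].
  by rewrite big_cons /= subrr mul0r.
by rewrite big_cons hs // mulr0.
Qed.

Lemma interp x k i0 : in_grade sigma xi k x -> col_stable W (factor_op (rho i0 x)).
Proof.
move=> Hk.
have ni0 : i0 \notin [seq i <- enum 'I_r | i != i0] by rewrite mem_filter eqxx.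
have [s [hs0 hs]] := choose_s ni0.
have := Gs_stab s Hk.
rewrite /Gs (bigD1 i0) //= [X in _ + X]big1 ?addr0.
  apply: stabZK; rewrite mulf_neq0 //.
  by rewrite /monom; apply/prodf_neq0 => l _; rewrite expfz_neq0.
move=> i ni; rewrite hs ?mulr0 ?scale0r //.
by rewrite mem_filter ni mem_enum.
Qed.
End Interp.

End Helpers.
Import Helpers.

Theorem theorem4p4
  (F : closedFieldType) (charF0 : [pchar F] =i pred0)
  (d : nat) (br : 'rV[F]_d -> 'rV[F]_d -> 'rV[F]_d) (g_simple : lie_simple br)
  (N : nat) (m : 'I_N -> nat) (sigma : 'I_N -> 'M[F]_d) (xi : 'I_N -> F)
  (sigma_aut : forall l, lie_aut br (sigma l))
  (sigma_ord : forall l, has_order (sigma l) (m l))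
  (sigma_comm : forall l l', sigma l *m sigma l' = sigma l' *m sigma l)
  (xi_prim : forall l, (m l).-primitive_root (xi l))
  (r : nat) (n : 'I_r -> nat) (rho : forall i : 'I_r, 'rV[F]_d -> 'M[F]_(n i))
  (rho_irr : forall i, irreducible_rep br (rho i))
  (b : 'I_r -> 'I_N -> F) (b_unit : forall i l, b i l != 0)
  (b_dist : forall i j : 'I_r, i != j ->
              exists l : 'I_N, b i l ^+ m l != b j l ^+ m l) :
  (0 < #|{: tidx n}|)%N /\
  forall W : 'M[F]_#|{: tidx n}|,
    (forall (k : 'I_N -> int) (x : 'rV[F]_d),
        in_grade sigma xi k x -> col_stable W (L_op rho b x k)) ->
    W == 0 \/ row_full W.
Proof.
have npos : forall i, (0 < n i)%N by move=> i; case: (rho_irr i).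
have rlin : forall i a x y, rho i (a *: x + y) = a *: rho i x + rho i y.
  by move=> i; case: (rho_irr i) => [[lin _] _ _].
split.
  apply/card_gt0P.
  by exists (@finfun 'I_r (fun i => 'I_(n i)) (fun i => Ordinal (npos i))).
move=> W HW.
have mpos : forall l, (0 < m l)%N by move=> l; case: (sigma_ord l).
have Hg : forall k x i0, in_grade sigma xi k x -> col_stable W (factor_op (rho i0 x)).
  by move=> k x i0 Hk; apply: (interp mpos xi_prim b_unit b_dist HW i0 Hk).
have Hall : forall i0 x, col_stable W (factor_op (rho i0 x)).
  move=> i0 x.
  apply: (all_S charF0 sigma_ord sigma_comm xi_prim
            (S := fun x => col_stable W (factor_op (rho i0 x)))).
    move=> y z hy hz /=.
    have -> : rho i0 (y + z) = rho i0 y + rho i0 z.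
      by have := rlin i0 1 y z; rewrite !scale1r.
    by rewrite factor_opD; apply: stabD.
  by move=> k y Hk; apply: Hg Hk.
have Hfull : forall i (A : 'M[F]_(n i)), col_stable W (factor_op A).
  move=> i.
  pose Q (B : 'M[F]_(n i)) := col_stable W (factor_op B^T).
  have Q1 : Q 1%:M by rewrite /Q trmx1 factor_op1; exact: stab1.
  have QD : forall A B, Q A -> Q B -> Q (A + B).
    by move=> A B; rewrite /Q linearD /= factor_opD; apply: stabD.
  have QZ : forall a A, Q A -> Q (a *: A).
    by move=> a A; rewrite /Q linearZ /= factor_opZ; apply: stabZ.
  have QM : forall A B, Q A -> Q B -> Q (A *m B).
    by move=> A B hA hB; rewrite /Q trmx_mul factor_opM; apply: stabM.
  have Qirr : forall U : 'M[F]_(n i), (forall B, Q B -> (U *m B <= U)%MS) ->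
      U = 0 \/ row_full U.
    move=> U HU.
    have : U == 0 \/ row_full U.
      case: (rho_irr i) => _ _; apply => x.
      rewrite /col_stable; apply: HU.
      by rewrite /Q trmxK; apply: Hall.
    by case=> [/eqP ->|]; [left | right].
  move=> A; have := burnside_row Q1 QD QZ QM Qirr A^T.
  by rewrite /Q trmxK.
exact: tensor_irr.
Qed.
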